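(* Let $k,t\ge1$ with $t$ a power of two and $k\le t/6$. Then there exists a valid perfect randomized $[t,k]$-interval system $\mathcal{F}$ with $\mathrm{val}(\mathcal{F})\le \dfrac{10k^2\log(t)}{t}$ (logarithm base 2).
   Context: An interval is a nonempty set $\{a,\ldots,b\}$ of integers; a $[t,k]$-interval system is a set of $k$ pairwise disjoint intervals contained in $[t]$; a randomized one is a distribution over such systems. $\mathrm{val}(F)=\sum_{I\in F}1/|I|$, $\mathrm{val}(\mathcal{F})=\mathbb{E}_{F\sim\mathcal{F}}\mathrm{val}(F)$. $\mathrm{Sets}(F)$ is the distribution of the set obtained by choosing independently a uniform element from each interval of $F$; $\mathrm{Sets}(\mathcal{F})$ samples $F\sim\mathcal{F}$ then a set from $\mathrm{Sets}(F)$. $\mathcal{F}$ is perfect if $\mathrm{Sets}(\mathcal{F})$ is uniform over all $k$-element subsets of $[t]$. $F$ is valid if $\sum_{I\in F}|I|\le t/2$; $\mathcal{F}$ is valid if all systems in its support are valid. *)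

(* Defs.v *)
(* Ground set [t] is modelled by 'I_t = {0,..,t-1}
   (an order-preserving relabelling of {1,..,t}). *)
From HB Require Import structures.
From mathcomp Require Import all_boot all_order all_algebra.
From mathcomp Require Import reals.
Set Implicit Arguments. Unset Strict Implicit. Unset Printing Implicit Defensive.
Import Order.TTheory GRing.Theory Num.Theory.
Local Open Scope ring_scope.

Section IntervalSystems.
Variable t : nat.

Definition is_interval (I : {set 'I_t}) : bool :=
  (I != set0) &&
  [forall x : 'I_t, forall y : 'I_t, forall z : 'I_t,
     [&& x \in I, z \in I, (x <= y)%N & (y <= z)%N] ==> (y \in I)].

Definition interval_system (k : nat) (F : {set {set 'I_t}}) : bool :=
  [&& #|F| == k, [forall I in F, is_interval I] & trivIset F].

Definition valid_system (F : {set {set 'I_t}}) : bool :=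
  ((\sum_(I in F) #|I|).*2 <= t)%N.

Variable R : realType.

Definition val_sys (F : {set {set 'I_t}}) : R :=
  \sum_(I in F) (#|I|%:R)^-1.

Definition choice_fun (F : {set {set 'I_t}})
    (c : {ffun {set 'I_t} -> option 'I_t}) : bool :=
  [forall I, if I \in F then (if c I is Some x then x \in I else false)
             else c I == None].

Definition chosen_set (c : {ffun {set 'I_t} -> option 'I_t}) : {set 'I_t} :=
  [set x | [exists I, c I == Some x]].

(* Sets(F)(S): probability that independently choosing a uniform element of
   each interval of F yields the set S (uniform over all choice functions). *)
Definition sets_prob (F : {set {set 'I_t}}) (S : {set 'I_t}) : R :=
  #|[set c | choice_fun F c & chosen_set c == S]|%:R /
  #|[set c | choice_fun F c]|%:R.

Definition randomized_system (k : nat) (mu : {ffun {set {set 'I_t}} -> R}) : Prop :=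
  (forall F, 0 <= mu F) /\ (\sum_F mu F = 1) /\
  (forall F, mu F != 0 -> interval_system k F).

Definition valid_rsystem (mu : {ffun {set {set 'I_t}} -> R}) : Prop :=
  forall F, mu F != 0 -> valid_system F.

Definition rsets_prob (mu : {ffun {set {set 'I_t}} -> R}) (S : {set 'I_t}) : R :=
  \sum_F mu F * sets_prob F S.

Definition perfect (k : nat) (mu : {ffun {set {set 'I_t}} -> R}) : Prop :=
  forall S : {set 'I_t},
    rsets_prob mu S = if #|S| == k then ('C(t, k)%:R)^-1 else 0.

Definition val_rsys (mu : {ffun {set {set 'I_t}} -> R}) : R :=
  \sum_F mu F * val_sys F.

End IntervalSystems.

(* Main.v *)
Require Import Defs.
From HB Require Import structures.
From mathcomp Require Import all_boot all_order all_algebra.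
From mathcomp Require Import reals.
From HB Require Import structures.
From mathcomp Require Import all_boot all_order all_algebra all_fingroup.
From mathcomp Require Import zify ring lra reals.
Require Import Defs.
Set Implicit Arguments. Unset Strict Implicit. Unset Printing Implicit Defensive.

Lemma divE2 x a b : a <= b -> x %/ 2 ^ b = (x %/ 2 ^ a) %/ 2 ^ (b - a).
Proof. by move=> h; rewrite -divnMA -expnD subnKC. Qed.

Lemma div_mono x y a b : a <= b -> x %/ 2 ^ a = y %/ 2 ^ a -> x %/ 2 ^ b = y %/ 2 ^ b.
Proof. by move=> h e; rewrite (divE2 x h) (divE2 y h) e. Qed.

Lemma pair_lem x y x' y' a :
  x %/ 2 ^ a = x' %/ 2 ^ a -> y %/ 2 ^ a = y' %/ 2 ^ a -> x %/ 2 ^ a != y %/ 2 ^ a ->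
  forall j, (x %/ 2 ^ j == y %/ 2 ^ j) = (x' %/ 2 ^ j == y' %/ 2 ^ j).
Proof.
move=> ex ey ne j; case: (leqP j a) => hj.
  apply/idP/idP => /eqP h; have := div_mono hj h; [|rewrite -ex -ey]; by move=> h'; rewrite h' eqxx in ne.
by rewrite (divE2 x (ltnW hj)) (divE2 y (ltnW hj)) (divE2 x' (ltnW hj)) (divE2 y' (ltnW hj)) ex ey.
Qed.

Definition blk m (j : nat) (s : 'I_(2 ^ m)) : {set 'I_(2 ^ m)} :=
  [set x : 'I_(2 ^ m) | x %/ 2 ^ j == s %/ 2 ^ j].
Definition sep m (S : {set 'I_(2 ^ m)}) (u : 'I_(2 ^ m)) (j : nat) : bool :=
  [forall v in S, (v != u :> 'I_(2 ^ m)) ==> (v %/ 2 ^ j != u %/ 2 ^ j)].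
Definition dlo m (S : {set 'I_(2 ^ m)}) (u : 'I_(2 ^ m)) : 'I_m.+1 :=
  [arg max_(j > ord0 | sep S u j) (j : nat)].
Definition dl m S u : nat := @dlo m S u.
Definition el m S u : nat := (@dl m S u - 2)%N.
Definition Phi m (S : {set 'I_(2 ^ m)}) : {set {set 'I_(2 ^ m)}} :=
  [set blk (el S s) s | s in S].

Lemma sep0 m (S : {set 'I_(2 ^ m)}) u : sep S u 0.
Proof. by apply/forall_inP => v _; rewrite expn0 !divn1; apply/implyP. Qed.

Lemma sep_mono m (S : {set 'I_(2 ^ m)}) u i j : i <= j -> sep S u j -> sep S u i.
Proof.
move=> hij /forall_inP h; apply/forall_inP => v vS; apply/implyP => nv.
have := implyP (h v vS) nv; apply: contra => /eqP e; apply/eqP; exact: div_mono e.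
Qed.

Lemma dl_spec m (S : {set 'I_(2 ^ m)}) u :
  [/\ dl S u <= m, sep S u (dl S u) & forall j, j <= m -> sep S u j -> j <= dl S u].
Proof.
rewrite /dl /dlo; case: arg_maxnP; first exact: sep0.
move=> i si mx; split => //; first by rewrite -ltnS.
by move=> j jm sj; have := mx (Ordinal (jm : j < m.+1)) sj.
Qed.

Lemma el_le_dl m (S : {set 'I_(2 ^ m)}) u : el S u <= dl S u.
Proof. by rewrite /el leq_subr. Qed.

Lemma sepP m (S : {set 'I_(2 ^ m)}) u j v : sep S u j -> v \in S -> v != u ->
  v %/ 2 ^ j != u %/ 2 ^ j.
Proof. by move=> /forall_inP h vS nv; exact: implyP (h v vS) nv. Qed.

Lemma in_blk m j (s x : 'I_(2 ^ m)) : (x \in blk j s) = (x %/ 2 ^ j == s %/ 2 ^ j).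
Proof. by rewrite inE. Qed.

Lemma blk_self m j (s : 'I_(2 ^ m)) : s \in blk j s.
Proof. by rewrite in_blk. Qed.

Lemma blk_other m (S : {set 'I_(2 ^ m)}) s s' j : s \in S -> s' \in S -> s' != s ->
  j <= dl S s -> s' \notin blk j s.
Proof.
move=> sS s'S ne hj; rewrite in_blk; case: (dl_spec S s) => _ sd _.
exact: sepP (sep_mono hj sd) s'S ne.
Qed.

Lemma blk_disj m (S : {set 'I_(2 ^ m)}) (f : 'I_(2 ^ m) -> nat) s s' :
  (forall u, f u <= dl S u) -> s \in S -> s' \in S -> s != s' ->
  [disjoint blk (f s) s & blk (f s') s'].
Proof.
move=> hf sS s'S ne; apply/pred0P => x /=; apply/negbTE/negP => /andP[].
rewrite !in_blk => /eqP e1 /eqP e2.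
case: (leqP (f s) (f s')) => h.
  have := div_mono h e1; rewrite e2 => e.
  have := blk_other s'S sS ne (hf s'); by rewrite in_blk e eqxx.
have := div_mono (ltnW h) e2; rewrite e1 => e.
rewrite eq_sym in ne; have := blk_other sS s'S ne (hf s).
by rewrite in_blk e eqxx.
Qed.

Lemma blk_inj m (S : {set 'I_(2 ^ m)}) (f : 'I_(2 ^ m) -> nat) :
  (forall u, f u <= dl S u) -> {in S &, injective (fun s => blk (f s) s)}.
Proof.
move=> hf s s' sS s'S /= e; apply/eqP; apply/negPn/negP => ne.
rewrite eq_sym in ne; have := blk_other sS s'S ne (hf s).
by rewrite e blk_self.
Qed.
Lemma sg_pair m (S0 : {set 'I_(2 ^ m)}) (sg : 'I_(2 ^ m) -> 'I_(2 ^ m)) :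
  (forall s, s \in S0 -> sg s \in blk (el S0 s) s) ->
  forall v s, v \in S0 -> s \in S0 -> v != s -> forall j,
  (sg v %/ 2 ^ j == sg s %/ 2 ^ j) = (v %/ 2 ^ j == s %/ 2 ^ j).
Proof.
move=> hsg v s vS sS ne j.
set a := maxn (el S0 v) (el S0 s).
have hv : sg v %/ 2 ^ a = v %/ 2 ^ a.
  by have := hsg v vS; rewrite in_blk => /eqP e; apply: div_mono e; exact: leq_maxl.
have hs : sg s %/ 2 ^ a = s %/ 2 ^ a.
  by have := hsg s sS; rewrite in_blk => /eqP e; apply: div_mono e; exact: leq_maxr.
have nea : v %/ 2 ^ a != s %/ 2 ^ a.
  rewrite /a; case: (leqP (el S0 v) (el S0 s)) => h.
    case: (dl_spec S0 s) => _ sd _.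
    exact: sepP (sep_mono (el_le_dl S0 s) sd) vS ne.
  case: (dl_spec S0 v) => _ sd _.
  rewrite eq_sym in ne; rewrite eq_sym.
  exact: sepP (sep_mono (el_le_dl S0 v) sd) sS ne.
by rewrite (pair_lem (esym hv) (esym hs) nea j).
Qed.

Lemma sg_inj m (S0 : {set 'I_(2 ^ m)}) (sg : 'I_(2 ^ m) -> 'I_(2 ^ m)) :
  (forall s, s \in S0 -> sg s \in blk (el S0 s) s) -> {in S0 &, injective sg}.
Proof.
move=> hsg v s vS sS e; apply/eqP; apply/negPn/negP => ne.
have := blk_disj (el_le_dl S0) vS sS ne.
move/pred0P/(_ (sg v)) => /=; by rewrite hsg // e hsg.
Qed.

Lemma sep_inv m (S0 : {set 'I_(2 ^ m)}) (sg : 'I_(2 ^ m) -> 'I_(2 ^ m)) :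
  (forall s, s \in S0 -> sg s \in blk (el S0 s) s) ->
  forall s, s \in S0 -> forall j, sep (sg @: S0) (sg s) j = sep S0 s j.
Proof.
move=> hsg s sS j; have inj := sg_inj hsg.
apply/forall_inP/forall_inP => h v.
  move=> vS; apply/implyP => ne.
  have ne' : sg v != sg s by apply: contra ne => /eqP /inj -> //.
  have := implyP (h (sg v) (imset_f sg vS)) ne'.
  by rewrite (sg_pair hsg vS sS ne).
case/imsetP => w wS ->; apply/implyP => ne.
have ne' : w != s by apply: contra ne => /eqP ->.
by rewrite (sg_pair hsg wS sS ne') (implyP (h w wS) ne').
Qed.

Lemma dl_inv m (S0 : {set 'I_(2 ^ m)}) (sg : 'I_(2 ^ m) -> 'I_(2 ^ m)) :
  (forall s, s \in S0 -> sg s \in blk (el S0 s) s) ->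
  forall s, s \in S0 -> dl (sg @: S0) (sg s) = dl S0 s.
Proof.
move=> hsg s sS; have hj := sep_inv hsg sS.
case: (dl_spec (sg @: S0) (sg s)) => l1 s1 m1; case: (dl_spec S0 s) => l2 s2 m2.
apply/eqP; rewrite eqn_leq; apply/andP; split.
  by apply: (m2 _ l1); rewrite -hj.
by apply: (m1 _ l2); rewrite hj.
Qed.

Lemma Phi_inv m (S0 : {set 'I_(2 ^ m)}) (sg : 'I_(2 ^ m) -> 'I_(2 ^ m)) :
  (forall s, s \in S0 -> sg s \in blk (el S0 s) s) -> Phi (sg @: S0) = Phi S0.
Proof.
move=> hsg; rewrite /Phi -imset_comp; apply: eq_in_imset => s sS /=.
rewrite /el (dl_inv hsg sS); apply/setP => x; rewrite !in_blk.
by have := hsg s sS; rewrite in_blk /el => /eqP ->.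
Qed.
Lemma card_blk m j (s : 'I_(2 ^ m)) : j <= m -> #|blk j s| = 2 ^ j.
Proof.
move=> jm; set q := s %/ 2 ^ j.
have p0 : 0 < 2 ^ j by rewrite expn_gt0.
have hq : q * 2 ^ j + 2 ^ j <= 2 ^ m.
  have e : 2 ^ m = 2 ^ (m - j) * 2 ^ j by rewrite -expnD subnK.
  have : q < 2 ^ (m - j) by rewrite ltn_divLR // -e.
  rewrite e -mulSnr => h; exact: leq_mul h (leqnn _).
pose g := fun i : 'I_(2 ^ j) => insubd s (q * 2 ^ j + i) : 'I_(2 ^ m).
have vg : forall i : 'I_(2 ^ j), val (g i) = q * 2 ^ j + i.
  move=> i; rewrite /g val_insubd ifT //.
  by apply: leq_trans hq; rewrite ltn_add2l.
have -> : blk j s = g @: [set: 'I_(2 ^ j)].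
  apply/setP => x; rewrite in_blk; apply/idP/imsetP.
    move=> /eqP e; have hx : x %% 2 ^ j < 2 ^ j by rewrite ltn_pmod.
    exists (Ordinal hx) => //; apply: val_inj; rewrite vg /=.
    by rewrite {1}(divn_eq x (2 ^ j)) e.
  by case=> i _ ->; rewrite vg divnMDl // divn_small // addn0.
rewrite card_imset ?cardsT ?card_ord //.
by move=> i i' e; apply: val_inj; have := congr1 val e; rewrite !vg => /addnI.
Qed.

Lemma blk_interval m j (s : 'I_(2 ^ m)) : is_interval (blk j s).
Proof.
apply/andP; split; first by apply/set0Pn; exists s; exact: blk_self.
apply/forallP => x; apply/forallP => y; apply/forallP => z; apply/implyP.
case/and4P; rewrite !in_blk => /eqP ex /eqP ez xy yz.
have h1 := leq_div2r (2 ^ j) xy; have h2 := leq_div2r (2 ^ j) yz.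
rewrite ex in h1; rewrite ez in h2; by rewrite eqn_leq h1 h2.
Qed.
Lemma SI_blk m (S : {set 'I_(2 ^ m)}) s : s \in S -> S :&: blk (el S s) s = [set s].
Proof.
move=> sS; apply/setP => x; rewrite !inE; apply/andP/eqP => [[xS xb]|->].
  apply/eqP; apply/negPn/negP => ne.
  by have := blk_other sS xS ne (el_le_dl S s); rewrite inE xb.
by rewrite sS eqxx.
Qed.

Definition cz m (S : {set 'I_(2 ^ m)}) : {ffun {set 'I_(2 ^ m)} -> option 'I_(2 ^ m)} :=
  [ffun I => if I \in Phi S then [pick x in S :&: I] else None].

Lemma cz_blk m (S : {set 'I_(2 ^ m)}) s : s \in S -> cz S (blk (el S s) s) = Some s.
Proof.
move=> sS; rewrite /cz ffunE.
have -> : blk (el S s) s \in Phi S by apply: imset_f.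
rewrite SI_blk //.
case: pickP => [x|]; first by rewrite inE => /eqP ->.
by move/(_ s); rewrite inE eqxx.
Qed.

Lemma cz_choice m (S : {set 'I_(2 ^ m)}) : choice_fun (Phi S) (cz S).
Proof.
apply/forallP => I; case: ifP => hI.
  by case/imsetP: hI => s sS ->; rewrite cz_blk // blk_self.
by rewrite /cz ffunE hI.
Qed.

Lemma cz_chosen m (S : {set 'I_(2 ^ m)}) : chosen_set (cz S) = S.
Proof.
apply/setP => x; rewrite inE; apply/existsP/idP.
  case=> I; rewrite /cz ffunE; case: ifP => // _.
  by case: pickP => // y; rewrite inE => /andP[yS _] /eqP [<-].
by move=> xS; exists (blk (el S x) x); rewrite cz_blk.
Qed.

Lemma cf_some m (F : {set {set 'I_(2 ^ m)}}) c I : choice_fun F c -> I \in F ->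
  exists2 x, c I = Some x & x \in I.
Proof.
move=> /forallP /(_ I) h hI; rewrite hI in h.
by move: h; case: (c I) => // x h; exists x.
Qed.

Lemma cf_none m (F : {set {set 'I_(2 ^ m)}}) c I : choice_fun F c -> I \notin F -> c I = None.
Proof. by move=> /forallP /(_ I) h hI; rewrite (negbTE hI) in h; apply/eqP. Qed.

Lemma cf_props m (S0 : {set 'I_(2 ^ m)}) c : choice_fun (Phi S0) c ->
  #|chosen_set c| = #|S0| /\ Phi (chosen_set c) = Phi S0.
Proof.
move=> hc; pose sg := fun s => odflt s (c (blk (el S0 s) s)).
have hsg : forall s, s \in S0 -> c (blk (el S0 s) s) = Some (sg s) /\ sg s \in blk (el S0 s) s.
  move=> s sS; have [x e xI] := cf_some hc (imset_f (fun s => blk (el S0 s) s) sS).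
  by rewrite /sg e.
have hsg2 : forall s, s \in S0 -> sg s \in blk (el S0 s) s by move=> s /hsg[].
have -> : chosen_set c = sg @: S0.
  apply/setP => x; rewrite inE; apply/existsP/imsetP.
    case=> I /eqP e; case: (boolP (I \in Phi S0)) => hI; last by rewrite (cf_none hc hI) in e.
    case/imsetP: hI e => s sS -> e; exists s => //.
    by have [e' _] := hsg s sS; rewrite e in e'; case: e'.
  by case=> s sS ->; exists (blk (el S0 s) s); have [-> _] := hsg s sS.
split; first by rewrite card_in_imset //; exact: sg_inj hsg2.
exact: Phi_inv.
Qed.

Lemma count_c m (S0 S : {set 'I_(2 ^ m)}) :
  #|[set c | choice_fun (Phi S0) c & chosen_set c == S]| =
  ((#|S| == #|S0|) && (Phi S == Phi S0)).
Proof.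
case: (boolP ((#|S| == #|S0|) && (Phi S == Phi S0))) => hb /=.
  case/andP: hb => /eqP hk /eqP hP.
  have -> : [set c | choice_fun (Phi S0) c & chosen_set c == S] = [set cz S].
    apply/setP => c; rewrite !inE; apply/andP/eqP => [[hc /eqP hS]|->].
      apply/ffunP => I; case: (boolP (I \in Phi S)) => hI.
        case/imsetP: (hI) => s sS eI.
        rewrite -hP in hc; have [y e yI] := cf_some hc hI.
        have yS : y \in S.
          rewrite -hS inE; apply/existsP; exists I.
          by apply/eqP; exact: e.
        have : y \in S :&: I by rewrite inE yS yI.
        move=> hy; have ey : y = s by move: hy; rewrite eI SI_blk // inE => /eqP.
        by rewrite e ey eI cz_blk.
      by rewrite -hP in hc; rewrite (cf_none hc hI) (cf_none (cz_choice S) hI).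
    by rewrite -hP cz_choice cz_chosen.
  by rewrite cards1.
apply/eqP; rewrite cards_eq0; apply/eqP/setP => c; rewrite !inE.
apply/negbTE/negP => /andP[hc /eqP hS].
have [h1 h2] := cf_props hc; rewrite hS in h1 h2.
by rewrite h1 h2 !eqxx in hb.
Qed.
Lemma sum_b2n (T : finType) (P : pred T) : \sum_(i : T) (P i : nat) = #|[set i | P i]|.
Proof.
rewrite -sum1_card [RHS]big_mkcond; apply: eq_bigr => i _; by rewrite inE; case: (P i).
Qed.

Lemma card_sum_part (A B : finType) (P : pred A) (f : A -> B) :
  #|[set c | P c]| = \sum_(b : B) #|[set c | P c & f c == b]|.
Proof.
rewrite -sum1_card (partition_big f xpredT) //=.
apply: eq_big => // b _; rewrite -sum1_card; apply: eq_bigl => c; by rewrite !inE.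
Qed.

Definition G m (k : nat) (F : {set {set 'I_(2 ^ m)}}) : {set {set 'I_(2 ^ m)}} :=
  [set S : {set 'I_(2 ^ m)} | (#|S| == k) && (Phi S == F)].

Lemma sumG m k (S : {set 'I_(2 ^ m)}) : \sum_F (S \in G k F : nat) = (#|S| == k).
Proof.
rewrite (bigD1 (Phi S)) //= big1 => [|F hF]; first by rewrite !inE eqxx andbT addn0.
by rewrite inE (eq_sym (Phi S)) (negbTE hF) andbF.
Qed.

Lemma sumG_all m k : \sum_(F : {set {set 'I_(2 ^ m)}}) #|G k F| = 'C(2 ^ m, k).
Proof.
have -> : \sum_(F : {set {set 'I_(2 ^ m)}}) #|G k F| =
    \sum_(F : {set {set 'I_(2 ^ m)}}) \sum_(S : {set 'I_(2 ^ m)}) (S \in G k F : nat).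
  apply: eq_bigr => F _; rewrite sum_b2n; apply: eq_card => S; by rewrite [RHS]inE.
rewrite exchange_big /=; under eq_bigr => S _ do rewrite sumG.
by rewrite sum_b2n card_draws card_ord.
Qed.

Lemma interval_Phi m (S0 : {set 'I_(2 ^ m)}) : interval_system #|S0| (Phi S0).
Proof.
apply/and3P; split.
- by rewrite card_in_imset //; exact: blk_inj (el_le_dl S0).
- by apply/forall_inP => I /imsetP [s _ ->]; exact: blk_interval.
apply/trivIsetP => A B /imsetP [s sS ->] /imsetP [s' s'S ->] ne.
apply: blk_disj (el_le_dl S0) sS s'S _; by apply: contra ne => /eqP ->.
Qed.

Lemma four_el d : 4 * 2 ^ (d - 2) <= 2 ^ d + 4.
Proof. case: d => [|[|d]] //; rewrite !subSS subn0 !expnS; lia. Qed.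

Lemma valid_Phi m (S0 : {set 'I_(2 ^ m)}) : 4 * #|S0| <= 2 ^ m -> valid_system (Phi S0).
Proof.
move=> hk; rewrite /valid_system.
have dm : forall u, dl S0 u <= m by move=> u; case: (dl_spec S0 u).
rewrite big_imset /=; last exact: blk_inj (el_le_dl S0).
under eq_bigr => s _ do rewrite card_blk ?(leq_trans (el_le_dl S0 s) (dm s)) //.
have hD : \sum_(s in S0) 2 ^ dl S0 s <= 2 ^ m.
  pose Q := [set blk (dl S0 s) s | s in S0].
  have tQ : trivIset Q.
    apply/trivIsetP => A B /imsetP [s sS ->] /imsetP [s' s'S ->] ne.
    apply: (@blk_disj _ S0 (dl S0) _ _ (fun u => leqnn _)) sS s'S _; by apply: contra ne => /eqP ->.
  have := eqP tQ; rewrite big_imset /=; last exact: (@blk_inj _ S0 (dl S0) (fun u => leqnn _)).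
  under eq_bigr => s _ do rewrite card_blk ?dm //.
  move=> ->; apply: leq_trans (max_card _) _; by rewrite card_ord.
have h4 : 4 * \sum_(s in S0) 2 ^ el S0 s <= \sum_(s in S0) 2 ^ dl S0 s + 4 * #|S0|.
  rewrite big_distrr /= [4 * #|S0|]mulnC -sum_nat_const -big_split /=.
  by apply: leq_sum => s _; exact: four_el.
rewrite -mul2n.
have ar : forall X Y k t, 4 * k <= t -> Y <= t -> 4 * X <= Y + 4 * k -> 2 * X <= t by lia.
exact: ar hk hD h4.
Qed.
Definition Pc (T : finType) (k : nat) (a b : T) : nat :=
  #|[set S : {set T} | [&& #|S| == k, a \in S & b \in S]]|.

Lemma count_pairs (T : finType) k (x : T -> T -> nat) :
  \sum_(S : {set T} | #|S| == k) \sum_(a in S) \sum_(b in S) x a b =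
  \sum_a \sum_b x a b * Pc k a b.
Proof.
have e1 : forall a b, x a b * Pc k a b =
    \sum_(S : {set T}) (if [&& #|S| == k, a \in S & b \in S] then x a b else 0).
  move=> a b; rewrite /Pc -sum_b2n big_distrr /=; apply: eq_bigr => S _.
  by case: ifP; rewrite ?muln1 ?muln0.
under eq_bigr => a _ do under eq_bigr => b _ do rewrite e1.
under eq_bigr => a _ do rewrite exchange_big /=.
rewrite exchange_big /= big_mkcond /=; apply: eq_bigr => S _.
case: ifP => hS /=; last by rewrite big1 // => a _; rewrite big1 // => b _; rewrite hS.
rewrite big_mkcond; apply: eq_bigr => a _ /=.
case: ifP => ha /=; first by rewrite big_mkcond.
by rewrite big1.
Qed.

Lemma Pc_le (T : finType) k (a b a' b' : T) : a != b -> a' != b' -> Pc k a b <= Pc k a' b'.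
Proof.
move=> nab nab'.
pose t1 := tperm a a'; pose b1 := t1 b; pose pi : {perm T} := (t1 * tperm b1 b')%g.
have hb1 : a' != b1 by rewrite /b1 -{1}(tpermL a a') (inj_eq perm_inj).
have pa : pi a = a' by rewrite permM tpermL tpermD // eq_sym.
have pb : pi b = b' by rewrite permM tpermL.
rewrite /Pc -[X in X <= _](card_imset _ (imset_inj (@perm_inj _ pi))).
apply: subset_leq_card; apply/subsetP => A /imsetP [S]; rewrite !inE => /and3P [hk ha hb] ->.
rewrite card_imset; last exact: perm_inj.
by rewrite hk -pa -pb !(mem_imset _ _ (@perm_inj _ pi)) ha hb.
Qed.

Lemma Pc_eq (T : finType) k (a b a' b' : T) : a != b -> a' != b' -> Pc k a b = Pc k a' b'.
Proof. by move=> h h'; apply/eqP; rewrite eqn_leq !Pc_le. Qed.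
Lemma geom n d (g : nat -> bool) : d <= n -> (forall l, d <= l -> l < n -> g l) ->
  2 ^ (n - d) <= 1 + \sum_(l < n) g l * 2 ^ (n - l.+1).
Proof.
elim: n => [|n IH] hd hg; first by rewrite (leqn0 d) in hd; move/eqP: hd => ->.
case: (leqP d n) => h; last first.
  have -> : d = n.+1 by apply/eqP; rewrite eqn_leq hd h.
  by rewrite subnn expn0 leq_addr.
rewrite big_ord_recr /= subnn hg // muln1.
have e : \sum_(i < n) g (widen_ord (leqnSn n) i) * 2 ^ (n.+1 - (widen_ord (leqnSn n) i).+1)
    = 2 * \sum_(l < n) g l * 2 ^ (n - l.+1).
  rewrite big_distrr /=; apply: eq_bigr => l _ /=.
  have hl := ltn_ord l.
  rewrite subSS -[n - l]prednK ?subn_gt0 // expnS; rewrite mulnCA; congr (_ * (_ * _)).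
  by rewrite subnS.
rewrite e subSn // expnS.
have := IH h (fun l hl hl' => hg l hl (ltnW hl')); lia.
Qed.

Definition cnt m (S : {set 'I_(2 ^ m)}) (a : 'I_(2 ^ m)) (j : nat) : nat :=
  \sum_(b in S) ((b != a) && (b %/ 2 ^ j == a %/ 2 ^ j)).

Lemma nsep_cnt m (S : {set 'I_(2 ^ m)}) a j : ~~ sep S a j -> 1 <= cnt S a j.
Proof.
case/forall_inPn => b bS; rewrite negb_imply => /andP [nb /negPn hb].
by rewrite /cnt (bigD1 b) //= nb hb.
Qed.

Lemma elem_bound m (S : {set 'I_(2 ^ m)}) s :
  2 ^ (m - el S s) <= 4 * (1 + \sum_(l < m) cnt S s l.+1 * 2 ^ (m - l.+1)).
Proof.
case: (dl_spec S s) => dm sd mx.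
have h1 : 2 ^ (m - el S s) <= 4 * 2 ^ (m - dl S s).
  rewrite (_ : 4 = 2 ^ 2) // -expnD leq_pexp2l //; rewrite /el; lia.
apply: leq_trans h1 _; rewrite leq_mul2l /=.
apply: leq_trans (geom (g := fun l => ~~ sep S s l.+1) dm _) _.
  move=> l hl hl'; apply/negP => hs; have := mx _ hl' hs; lia.
rewrite leq_add2l; apply: leq_sum => l _; rewrite leq_mul2r; apply/orP; right.
by case: (boolP (sep S s l.+1)) => // /nsep_cnt.
Qed.
Lemma sum_in_b2n (T : finType) (S : {set T}) (P : pred T) :
  \sum_(b in S) (P b : nat) = #|[set b in S | P b]|.
Proof.
have -> : \sum_(b in S) (P b : nat) = \sum_b ((b \in S) && P b : nat).
  by rewrite big_mkcond; apply: eq_bigr => b _; case: (b \in S).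
by rewrite sum_b2n.
Qed.

Lemma pairs_const (T : finType) k (x : T -> T -> nat) (a0 b0 : T) : a0 != b0 ->
  (forall a, x a a = 0) ->
  \sum_a \sum_b x a b * Pc k a b = Pc k a0 b0 * \sum_a \sum_b x a b.
Proof.
move=> n0 hx; rewrite big_distrr; apply: eq_bigr => a _; rewrite big_distrr.
apply: eq_bigr => b _; case: (eqVneq a b) => [->|ne]; first by rewrite hx mul0n /= muln0.
by rewrite /= (Pc_eq k ne n0) mulnC.
Qed.

Lemma E1 m k (a0 b0 : 'I_(2 ^ m)) : a0 != b0 ->
  'C(2 ^ m, k) * (k * (k - 1)) = Pc k a0 b0 * (2 ^ m * (2 ^ m - 1)).
Proof.
move=> n0.
have := count_pairs k (fun a b : 'I_(2 ^ m) => (b != a : nat)).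
rewrite (@pairs_const _ k _ a0 b0 n0); last by move=> a; rewrite eqxx.
have -> : \sum_(a : 'I_(2 ^ m)) \sum_(b : 'I_(2 ^ m)) (b != a : nat) = 2 ^ m * (2 ^ m - 1).
  under eq_bigr => a _ do rewrite sum_b2n.
  rewrite (eq_bigr (fun _ => 2 ^ m - 1)) ?sum_nat_const ?card_ord //.
  move=> a _; transitivity #|[set~ a]|; last by rewrite cardsC1 card_ord subn1.
  by apply: eq_card => b; rewrite !inE.
move <-.
rewrite (eq_bigr (fun _ => k * (k - 1))).
  rewrite sum_nat_const; congr (_ * _).
  transitivity 'C(#|'I_(2 ^ m)|, k); first by rewrite card_ord.
  by rewrite -card_draws; apply: eq_card => S; rewrite !inE.
move=> S /eqP hS; rewrite -hS (eq_bigr (fun _ => #|S| - 1)) ?sum_nat_const //.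
move=> a aS; rewrite sum_in_b2n (cardsD1 a S) aS add1n subSS subn0.
by apply: eq_card => b; rewrite !inE andbC.
Qed.

Lemma E2 m k (a0 b0 : 'I_(2 ^ m)) j : a0 != b0 -> j <= m ->
  \sum_(S : {set 'I_(2 ^ m)} | #|S| == k) \sum_(s in S) cnt S s j =
  Pc k a0 b0 * (2 ^ m * (2 ^ j - 1)).
Proof.
move=> n0 hj.
have := count_pairs k (fun a b : 'I_(2 ^ m) => ((b != a) && (b %/ 2 ^ j == a %/ 2 ^ j) : nat)).
rewrite (@pairs_const _ k _ a0 b0 n0); last by move=> a; rewrite eqxx.
move=> h; rewrite /cnt h; congr (_ * _).
rewrite (eq_bigr (fun _ => 2 ^ j - 1)) ?sum_nat_const ?card_ord //.
move=> a _; rewrite sum_b2n; transitivity #|blk j a :\ a|.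
  by apply: eq_card => b; rewrite !inE.
by have := cardsD1 a (blk j a); rewrite blk_self card_blk // => ->; rewrite add1n subSS subn0.
Qed.
Lemma arith2 m k C : 1 <= m -> 4 * (C * k + m * (2 * (C * (k * (k - 1))))) <= 8 * m * k ^ 2 * C.
Proof.
move=> hm; case: k => [|k]; first by rewrite !(mul0n, muln0, addn0).
rewrite subSS subn0.
have -> : 8 * m * k.+1 ^ 2 * C = 4 * (2 * m * C * k.+1 + m * (2 * (C * (k.+1 * k)))).
  rewrite -[k.+1]addn1; ring.
rewrite leq_mul2l /= leq_add2r.
rewrite -[C * k.+1]mul1n -!mulnA; apply: leq_mul => //.
by rewrite -{1}[C * k.+1]mul1n leq_mul2r hm orbT.
Qed.

Lemma arith1 P u v t : u * v = t -> 2 <= t -> P * (t * (u - 1)) * v <= 2 * (P * (t * (t - 1))).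
Proof.
move=> e ht.
have h1 : P * (t * (u - 1)) * v <= P * t * t.
  rewrite -{3}e -!mulnA; apply: leq_mul => //; apply: leq_mul => //.
  by apply: leq_mul => //; exact: leq_subr.
apply: leq_trans h1 _.
have : t <= 2 * (t - 1) by lia.
move=> h; have -> : 2 * (P * (t * (t - 1))) = (P * t) * (2 * (t - 1)) by ring.
exact: leq_mul.
Qed.

Lemma N_bound m k : 1 <= m ->
  \sum_(S : {set 'I_(2 ^ m)} | #|S| == k) \sum_(s in S) 2 ^ (m - el S s)
  <= 8 * m * k ^ 2 * 'C(2 ^ m, k).
Proof.
move=> hm.
have ht : 2 <= 2 ^ m by rewrite -{1}(expn1 2) leq_pexp2l.
have h0 : 0 < 2 ^ m by lia.
have h1 : 1 < 2 ^ m by lia.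
pose a0 : 'I_(2 ^ m) := Ordinal h0; pose b0 : 'I_(2 ^ m) := Ordinal h1.
have n0 : a0 != b0 by [].
have e1 := E1 k n0.
set C := 'C(2 ^ m, k) in e1 *; set P0 := Pc k a0 b0 in e1 *.
pose PS j := \sum_(S : {set 'I_(2 ^ m)} | #|S| == k) \sum_(s in S) cnt S s j.
have st1 : \sum_(S : {set 'I_(2 ^ m)} | #|S| == k) \sum_(s in S) 2 ^ (m - el S s) <=
   \sum_(S : {set 'I_(2 ^ m)} | #|S| == k) \sum_(s in S)
      4 * (1 + \sum_(l < m) cnt S s l.+1 * 2 ^ (m - l.+1)).
  by apply: leq_sum => S _; apply: leq_sum => s _; exact: elem_bound.
have st2 : \sum_(S : {set 'I_(2 ^ m)} | #|S| == k) \sum_(s in S)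
      4 * (1 + \sum_(l < m) cnt S s l.+1 * 2 ^ (m - l.+1)) =
    4 * (C * k + \sum_(l < m) PS l.+1 * 2 ^ (m - l.+1)).
  under eq_bigr => S _ do rewrite -big_distrr /=.
  rewrite -big_distrr /=; congr (_ * _).
  under eq_bigr => S _ do rewrite big_split /=.
  rewrite big_split /=; congr (_ + _).
    rewrite (eq_bigr (fun _ => k)); last by move=> S /eqP <-; rewrite sum1_card.
    rewrite sum_nat_const; congr (_ * _).
    transitivity 'C(#|'I_(2 ^ m)|, k); last by rewrite card_ord.
    by rewrite -card_draws; apply: eq_card => S; rewrite !inE.
  under eq_bigr => S _ do rewrite exchange_big /=.
  rewrite exchange_big /=; apply: eq_bigr => l _.
  rewrite /PS big_distrl /=; apply: eq_bigr => S _; by rewrite big_distrl.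
have st3 : forall l : 'I_m, PS l.+1 * 2 ^ (m - l.+1) <= 2 * (C * (k * (k - 1))).
  move=> l; have hl : l.+1 <= m := ltn_ord l.
  rewrite /PS (E2 k n0 hl) e1.
  have eu : 2 ^ l.+1 * 2 ^ (m - l.+1) = 2 ^ m by rewrite -expnD subnKC.
  exact: arith1 eu ht.
have st4 : \sum_(l < m) PS l.+1 * 2 ^ (m - l.+1) <= m * (2 * (C * (k * (k - 1)))).
  have : \sum_(l < m) PS l.+1 * 2 ^ (m - l.+1) <= \sum_(l < m) 2 * (C * (k * (k - 1))).
    by apply: leq_sum => l _; exact: st3.
  by rewrite sum_nat_const card_ord.
apply: leq_trans st1 _; rewrite st2.
apply: leq_trans (arith2 k C hm); rewrite leq_mul2l /= leq_add2l; exact: st4.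
Qed.
Unset Implicit Arguments.
Import Order.TTheory GRing.Theory Num.Theory.
Local Open Scope ring_scope.

Lemma inv_pow2 (R : realType) m e : (e <= m)%N ->
  ((2 ^ e)%:R : R)^-1 = (2 ^ (m - e))%:R / (2 ^ m)%:R.
Proof.
move=> h; rewrite -{2}(subnK h) expnD natrM.
have h1 : ((2 ^ e)%:R : R) != 0 by rewrite pnatr_eq0 expn_eq0.
have h2 : ((2 ^ (m - e))%:R : R) != 0 by rewrite pnatr_eq0 expn_eq0.
by rewrite invfM mulrA divff // mul1r.
Qed.

Lemma val_Phi (R : realType) m (S : {set 'I_(2 ^ m)}) :
  val_sys R (Phi S) = (\sum_(s in S) 2 ^ (m - el S s))%:R / (2 ^ m)%:R.
Proof.
rewrite /val_sys big_imset /=; last exact: blk_inj (el_le_dl S).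
rewrite natr_sum mulr_suml; apply: eq_bigr => s _.
have hm : (el S s <= m)%N by case: (dl_spec S s) => dm _ _; apply: leq_trans (el_le_dl S s) dm.
by rewrite card_blk // (inv_pow2 R m _ hm).
Qed.
Lemma denom_count m (S0 : {set 'I_(2 ^ m)}) :
  #|[set c | choice_fun (Phi S0) c]| = #|G #|S0| (Phi S0)|.
Proof.
rewrite (card_sum_part _ (@chosen_set (2 ^ m))).
under eq_bigr => S _ do rewrite count_c.
rewrite sum_b2n; apply: eq_card => S; by rewrite !inE.
Qed.

(* t = 2^m, so log2 t = m *)
Theorem mainTheorem15 (R : realType) (k m : nat) :
  (1 <= k)%N -> (k%:R <= (2 ^ m)%:R / 6 :> R) ->
  exists mu : {ffun {set {set 'I_(2 ^ m)}} -> R},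
    [/\ randomized_system k mu, valid_rsystem mu, perfect k mu &
        val_rsys mu <= 10 * (k ^ 2)%:R * m%:R / (2 ^ m)%:R].
Proof.
move=> hk1 hkR.
have hk6 : (6 * k <= 2 ^ m)%N.
  have h6 : (0 : R) < 6 by [].
  rewrite ler_pdivlMr // in hkR.
  by rewrite mulnC -(ler_nat R) natrM.
have hm : (1 <= m)%N.
  case: m hk6 {hkR} => // ; rewrite expn0; lia.
have hkt : (k <= 2 ^ m)%N by lia.
set C := 'C(2 ^ m, k).
have C0 : (0 < C)%N by rewrite bin_gt0.
have CR : (C%:R : R) != 0 by rewrite pnatr_eq0 -lt0n.
pose mu : {ffun {set {set 'I_(2 ^ m)}} -> R} := [ffun F => #|G k F|%:R / C%:R].
have muE : forall F, mu F = #|G k F|%:R / C%:R by move=> F; rewrite ffunE.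
have supp : forall F, mu F != 0 -> exists2 S0 : {set 'I_(2 ^ m)}, #|S0| = k & F = Phi S0.
  move=> F; rewrite muE; case: (set_0Vmem (G k F)) => [->|[S0]].
    by rewrite cards0 mul0r eqxx.
  by rewrite inE => /andP [/eqP h /eqP <-] _; exists S0.
exists mu; split.
- split; [|split].
  + by move=> F; rewrite muE divr_ge0.
  + under eq_bigr => F _ do rewrite muE.
    by rewrite -mulr_suml -natr_sum sumG_all divff.
  + by move=> F /supp [S0 <- ->]; exact: interval_Phi.
- by move=> F /supp [S0 h ->]; apply: valid_Phi; rewrite h; lia.
- move=> S; rewrite /rsets_prob.
  have term : forall F, mu F * sets_prob R F S = (S \in G k F)%:R / C%:R.
    move=> F; case: (eqVneq (mu F) 0) => [mu0|/supp [S0 hS0 eF]].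
      rewrite mu0 mul0r; move: mu0; rewrite muE => /eqP.
      rewrite mulf_eq0 invr_eq0 (negbTE CR) orbF pnatr_eq0 cards_eq0 => /eqP ->.
      by rewrite inE mul0r.
    subst F; rewrite /sets_prob denom_count count_c hS0 muE.
    have -> : ((#|S| == k) && (Phi S == Phi S0)) = (S \in G k (Phi S0)) by rewrite inE.
    have g0 : (#|G k (Phi S0)|%:R : R) != 0.
      rewrite pnatr_eq0 cards_eq0; apply/set0Pn; exists S0; by rewrite inE hS0 !eqxx.
    by field; rewrite g0 CR.
  under eq_bigr => F _ do rewrite term.
  rewrite -mulr_suml -natr_sum sumG.
  by case: (#|S| == k); rewrite ?mul1r ?mul0r.
- rewrite /val_rsys.
  have e1 : forall F, mu F * val_sys R F =
      (\sum_(S in G k F) (\sum_(s in S) 2 ^ (m - el S s))%:R / (2 ^ m)%:R) / C%:R.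
    move=> F; rewrite muE mulrC mulrA; congr (_ / _).
    transitivity (\sum_(S in G k F) val_sys R F).
      by rewrite sumr_const mulr_natr.
    by apply: eq_bigr => S; rewrite inE => /andP [_ /eqP <-]; rewrite val_Phi.
  under eq_bigr => F _ do rewrite e1.
  rewrite -mulr_suml.
  have e2 : \sum_(F : {set {set 'I_(2 ^ m)}}) \sum_(S in G k F) (\sum_(s in S) 2 ^ (m - el S s))%:R / ((2 ^ m)%:R : R)
      = (\sum_(S : {set 'I_(2 ^ m)} | #|S| == k) \sum_(s in S) 2 ^ (m - el S s))%:R / (2 ^ m)%:R.
    rewrite natr_sum mulr_suml (partition_big (@Phi m) xpredT) //=.
    apply: eq_big => // F _; apply: eq_bigl => S; by rewrite inE.
  rewrite e2.
  have hN := N_bound k hm.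
  have hN' : ((\sum_(S : {set 'I_(2 ^ m)} | #|S| == k) \sum_(s in S) 2 ^ (m - el S s))%:R : R)
      <= (8 * m * k ^ 2 * C)%:R by rewrite ler_nat.
  have t0 : (0 : R) < (2 ^ m)%:R by rewrite ltr0n expn_gt0.
  have c0 : (0 : R) < C%:R by rewrite ltr0n.
  apply: le_trans (_ : (8 * m * k ^ 2 * C)%:R / (2 ^ m)%:R / C%:R <= _).
    by rewrite ler_pM2r ?invr_gt0 // ler_pM2r ?invr_gt0.
  have t0' : ((2 ^ m)%:R : R) != 0 by rewrite pnatr_eq0 expn_eq0.
  have -> : (8 * m * k ^ 2 * C)%:R / (2 ^ m)%:R / C%:R = (8 * m * k ^ 2)%:R / ((2 ^ m)%:R : R).
    by rewrite natrM; field; rewrite t0' CR.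
  rewrite ler_pM2r ?invr_gt0 //.
  have -> : 10 * (k ^ 2)%:R * m%:R = (10 * k ^ 2 * m)%:R :> R by rewrite !natrM.
  rewrite ler_nat; have : (8 * m * k ^ 2 <= 10 * k ^ 2 * m)%N.
    by rewrite mulnAC leq_mul2r leq_mul2r !orbT.
  done.
Qed.
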